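(* Let $n\ge 538$ be an integer and $\lambda$ a positive integer. Then there is no graphical $2$-$\left(\binom{n}{2},5,\lambda\right)$ design.
   Context: For a finite set $X$ and integer $t\ge 0$, $\binom{X}{t}$ denotes the set of $t$-subsets of $X$. A $t$-$(v,k,\lambda)$ design is a pair $(X,\mathcal{B})$ with $|X|=v$ and $\mathcal{B}\subseteq\binom{X}{k}$ (the blocks) such that every $T\in\binom{X}{t}$ is contained in exactly $\lambda$ blocks; it is moreover required that $t\ge 2$, $t<k$, $\mathcal{B}\neq\emptyset$ and $\mathcal{B}\neq\binom{X}{k}$. An automorphism of $(X,\mathcal{B})$ is a bijection $\sigma:X\to X$ with $\sigma(\mathcal{B})=\mathcal{B}$. Let $V$ be a set with $|V|=n$; the symmetric group $\mathrm{Sym}(V)$ acts on $\binom{V}{2}$ (the edge set of the complete graph $K_n$), giving a permutation group $\mathcal{S}_n^{[2]}\le \mathrm{Sym}(\binom{V}{2})$. A $t$-$(v,k,\lambda)$ design $(X,\mathcal{B})$ is graphical if $v=\binom{n}{2}$ and its automorphism group contains a subgroup that is permutation isomorphic to $\mathcal{S}_n^{[2]}$ (equivalently, one may take $X$ to be the edge set of $K_n$ and $\mathcal{B}$ a set of $k$-edge subgraphs of $K_n$ closed under graph isomorphism, i.e. a union of $\mathcal{S}_n^{[2]}$-orbits on $\binom{X}{k}$). *)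

(* Defs.v *)
From mathcomp Require Import all_boot all_fingroup.
Unset Printing Implicit Defensive.

Definition edges (n : nat) : {set {set 'I_n}} := [set e : {set 'I_n} | #|e| == 2].

(* t-(v,k,lambda) design on point set X = edges n (v = 'C(n,2)),
   blocks B : set of k-subsets of X. *)
Definition is_design (n t k lam : nat) (B : {set {set {set 'I_n}}}) : Prop :=
  2 <= t /\ t < k /\
  B != set0 /\
  B != [set b : {set {set 'I_n}} | (b \subset edges n) && (#|b| == k)] /\
  (forall b, b \in B -> b \subset edges n /\ #|b| = k) /\
  (forall T : {set {set 'I_n}}, T \subset edges n -> #|T| = t ->
      #|[set b in B | T \subset b]| = lam).

Definition edge_act n (s : {perm 'I_n}) (e : {set 'I_n}) : {set 'I_n} := s @: e.
Definition block_act n (s : {perm 'I_n}) (b : {set {set 'I_n}}) : {set {set 'I_n}} :=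
  edge_act n s @: b.

Definition graphical_design (n t k lam : nat) (B : {set {set {set 'I_n}}}) : Prop :=
  is_design n t k lam B /\
  (forall s : {perm 'I_n}, block_act n s @: B = B).

(* Main.v *)
Require Import Defs.
From mathcomp Require Import all_boot all_fingroup.
From mathcomp Require Import zify.
Set Implicit Arguments. Unset Strict Implicit.

Lemma perm_ext (T : finType) (s1 s2 : seq T) :
  uniq s1 -> uniq s2 -> size s1 = size s2 -> exists p : {perm T}, map p s1 = s2.
Proof.
elim: s1 s2 => [|x s1 IH] [|y s2] //=.
  by move=> _ _ _; exists 1%g.
move=> /andP[xs1 u1] /andP[ys2 u2] [hs].
have [p hp] := IH s2 u1 u2 hs.
exists (p * tperm (p x) y)%g.
rewrite permM tpermL; congr (_ :: _).
rewrite -hp; apply/eq_in_map => z zs.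
rewrite permM tpermD //.
  rewrite (inj_eq perm_inj); apply/eqP => ex; subst z; by rewrite zs in xs1.
apply/eqP => ey; subst y; move: ys2; by rewrite -hp map_f.
Qed.

Lemma set2_enum (T : finType) (x0 : T) (e : {set T}) : #|e| = 2 ->
  e = [set nth x0 (enum e) 0; nth x0 (enum e) 1].
Proof.
rewrite cardE => hs; apply/setP => z; rewrite -mem_enum.
case: (enum e) hs => [|x [|y [|]]] //= _.
by rewrite !inE.
Qed.

Definition vseq n (x0 : 'I_n) (b : {set {set 'I_n}}) : seq 'I_n :=
  mkseq (fun k => nth x0 (enum (nth set0 (enum b) k./2)) (odd k)) 10.

Definition matching n (b : {set {set 'I_n}}) :=
  b \subset edges n /\ #|b| = 5 /\
  (forall e f, e \in b -> f \in b -> e != f -> [disjoint e & f]).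

Lemma edge_card n (e : {set 'I_n}) : e \in edges n -> #|e| = 2.
Proof. by rewrite inE => /eqP. Qed.

Lemma vseq_uniq n (x0 : 'I_n) b : matching b -> uniq (vseq x0 b).
Proof.
move=> [sb [cb db]].
have se : size (enum b) = 5 by rewrite -cardE.
rewrite /vseq /mkseq map_inj_in_uniq ?iota_uniq //.
move=> k k'; rewrite !mem_iota /= !add0n => hk hk'.
set i := k./2; set i' := k'./2.
have hi : i < 5 by rewrite /i; lia.
have hi' : i' < 5 by rewrite /i'; lia.
set e := nth set0 (enum b) i; set e' := nth set0 (enum b) i'.
have eb : e \in b by rewrite -mem_enum mem_nth ?se.
have eb' : e' \in b by rewrite -mem_enum mem_nth ?se.
have ce : size (enum e) = 2 by rewrite -cardE edge_card // (subsetP sb).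
have ce' : size (enum e') = 2 by rewrite -cardE edge_card // (subsetP sb).
move=> heq.
have vi : nth x0 (enum e) (odd k) \in e by rewrite -mem_enum mem_nth // ce; case: odd.
have vi' : nth x0 (enum e') (odd k') \in e' by rewrite -mem_enum mem_nth // ce'; case: odd.
have ii : i = i'.
  apply/eqP; rewrite -(nth_uniq set0 _ _ (enum_uniq (mem b))) ?se //.
  apply/negPn/negP => ne.
  have := db _ _ eb eb' ne; rewrite -setI_eq0 => /eqP ie.
  have : nth x0 (enum e) (odd k) \in e :&: e' by rewrite inE vi heq vi'.
  by rewrite ie inE.
have ee : e = e' by rewrite /e /e' ii.
rewrite -ee in heq.
have oo : odd k = odd k'.
  apply/eqP; move: heq => /eqP; rewrite nth_uniq ?ce ?enum_uniq //; last by case: odd.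
    by case: (odd k); case: (odd k').
  by case: odd.
rewrite -[k]odd_double_half -[k']odd_double_half oo -/i -/i' ii //.
Qed.

Lemma vseq_edge n (x0 : 'I_n) b i : matching b -> i < 5 ->
  nth set0 (enum b) i = [set nth x0 (vseq x0 b) i.*2; nth x0 (vseq x0 b) i.*2.+1].
Proof.
move=> [sb [cb db]] hi.
have se : size (enum b) = 5 by rewrite -cardE.
have eb : nth set0 (enum b) i \in b by rewrite -mem_enum mem_nth ?se.
rewrite /vseq !nth_mkseq; try lia.
rewrite -[i.*2.+1]/(true + i.*2) -[i.*2]/(false + i.*2) !half_bit_double /=.
rewrite odd_double.
by apply: set2_enum; apply: edge_card; apply: (subsetP sb).
Qed.

Lemma match_trans n (x0 : 'I_n) b1 b2 : matching b1 -> matching b2 ->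
  exists p : {perm 'I_n}, block_act n p b1 = b2.
Proof.
move=> m1 m2.
have hsz : size (vseq x0 b1) = size (vseq x0 b2) by rewrite !size_mkseq.
have [p hp] := perm_ext (vseq_uniq x0 m1) (vseq_uniq x0 m2) hsz.
exists p.
have key : forall i, i < 5 -> edge_act n p (nth set0 (enum b1) i) = nth set0 (enum b2) i.
  move=> i hi; rewrite (vseq_edge x0 m1 hi) (vseq_edge x0 m2 hi) /edge_act.
  rewrite imsetU1 imset_set1 -hp !(nth_map x0) // size_mkseq; lia.
have [_ [c1 _]] := m1; have [_ [c2 _]] := m2.
have se1 : size (enum b1) = 5 by rewrite -cardE.
apply/eqP; rewrite eqEcard; apply/andP; split.
  apply/subsetP => _ /imsetP[e eb ->].
  have hi : index e (enum b1) < 5 by rewrite -se1 index_mem mem_enum.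
  rewrite (_ : e = nth set0 (enum b1) (index e (enum b1))); last by rewrite nth_index ?mem_enum.
  by rewrite key // -mem_enum mem_nth // -cardE c2.
rewrite /block_act (card_imset _ (imset_inj (@perm_inj _ p))) c1 c2 //.
Qed.

Definition adjb n (e f : {set 'I_n}) : bool := (e != f) && ~~ [disjoint e & f].
Definition disb n (e f : {set 'I_n}) : bool := [disjoint e & f].
Definition acnt n (b : {set {set 'I_n}}) := \sum_(e in b) \sum_(f in b) (adjb e f : nat).
Definition dcnt n (b : {set {set 'I_n}}) := \sum_(e in b) \sum_(f in b) (disb e f : nat).

Lemma sum_bool (T : finType) (A : {set T}) (P : pred T) :
  \sum_(x in A) (P x : nat) = #|[set x in A | P x]|.
Proof.
rewrite -sum1_card big_mkcond [RHS]big_mkcond /=; apply: eq_bigr => x _.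
by rewrite !inE; case: (x \in A); case: (P x).
Qed.

Lemma sum_neq (T : finType) (A : {set T}) x : x \in A ->
  \sum_(y in A) ((x != y) : nat) = #|A| - 1.
Proof.
move=> xA; rewrite sum_bool (cardsD1 x A) xA add1n subn1 /=.
rewrite (_ : [set y in A | x != y] = A :\ x) //; apply/setP => y; rewrite !inE eq_sym; by case: (y \in A); rewrite ?andbF ?andbT.
Qed.

Lemma adj_dis n (e f : {set 'I_n}) : e != set0 -> (adjb e f : nat) + disb e f = (e != f).
Proof.
move=> ne; rewrite /adjb /disb.
case hd: [disjoint e & f]; rewrite /= ?andbT ?andbF ?addn0 //.
case: eqP => // ef; subst f; move: hd; rewrite -setI_eq0 setIid => /eqP h.
by rewrite h eqxx in ne.
Qed.

Lemma edge_ne0 n (e : {set 'I_n}) : e \in edges n -> e != set0.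
Proof. by rewrite inE => /eqP h; apply/eqP => e0; rewrite e0 cards0 in h. Qed.

Lemma sum_sub (T : finType) (A E : {set T}) (h : T -> nat) : A \subset E ->
  \sum_(x in A) h x = \sum_(x in E) ((x \in A) * h x).
Proof.
move=> sAE; rewrite big_mkcond [RHS]big_mkcond /=; apply: eq_bigr => x _.
case xA: (x \in A); rewrite ?mul1n ?mul0n //.
by rewrite (subsetP sAE).
by case: (x \in E).
Qed.

Lemma sum_blocks n (F : {set {set {set 'I_n}}}) mu (g : {set 'I_n} -> {set 'I_n} -> nat) :
 (forall b, b \in F -> b \subset edges n) ->
 (forall e f, e \in edges n -> f \in edges n -> e != f ->
     #|[set b in F | (e \in b) && (f \in b)]| = mu) ->
 (forall e f, e \in edges n -> f \in edges n -> 0 < g e f -> e != f) ->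
 \sum_(b in F) \sum_(e in b) \sum_(f in b) g e f
   = mu * \sum_(e in edges n) \sum_(f in edges n) g e f.
Proof.
move=> hF hmu hg.
transitivity (\sum_(b in F) \sum_(e in edges n) \sum_(f in edges n)
                 ((e \in b) * ((f \in b) * g e f))).
  apply: eq_bigr => b bF; rewrite (sum_sub _ (hF b bF)); apply: eq_bigr => e _.
  by rewrite (sum_sub _ (hF b bF)) big_distrr.
rewrite exchange_big big_distrr /=; apply: eq_bigr => e eE.
rewrite exchange_big big_distrr /=; apply: eq_bigr => f fE.
transitivity (\sum_(b in F) ((e \in b) && (f \in b) : nat) * g e f).
  by apply: eq_bigr => b _; case: (e \in b); case: (f \in b); rewrite /= ?mul0n ?mul1n.
rewrite -big_distrl sum_bool /=.
case: (posnP (g e f)) => [->|gp]; first by rewrite !muln0.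
by rewrite hmu // hg.
Qed.

Lemma card_edges n : #|edges n| = 'C(n, 2).
Proof. by rewrite /edges card_draws card_ord. Qed.

Lemma dis_sum n (e : {set 'I_n}) : e \in edges n ->
  \sum_(f in edges n) (disb e f : nat) = 'C(n - 2, 2).
Proof.
move=> eE; rewrite sum_bool.
rewrite (_ : [set f in edges n | disb e f] = [set f : {set 'I_n} | f \subset ~: e & #|f| == 2]).
  rewrite cards_draws; congr 'C(_, _).
  have := cardsC e; rewrite card_ord (_ : #|e| = 2); last by move: eE; rewrite inE => /eqP.
  lia.
by apply/setP => f; rewrite !inE /disb disjoint_sym disjoints_subset andbC.
Qed.

Lemma adj_sum n (e : {set 'I_n}) : e \in edges n ->
  \sum_(f in edges n) (adjb e f : nat) = 'C(n, 2) - 1 - 'C(n - 2, 2).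
Proof.
move=> eE.
have h : \sum_(f in edges n) ((adjb e f : nat) + disb e f) = 'C(n, 2) - 1.
  rewrite -card_edges -(sum_neq eE); apply: eq_bigr => f _.
  by rewrite adj_dis // edge_ne0.
rewrite big_split /= dis_sum // in h; by rewrite -h addnK.
Qed.

Lemma bin2S k : 'C(k.+1, 2) = 'C(k, 2) + k.
Proof. by rewrite binS bin1. Qed.

Lemma key_arith n : 3 <= n ->
  4 * 'C(n - 2, 2) = (n - 3) * ('C(n, 2) - 1 - 'C(n - 2, 2)).
Proof.
move=> hn; have [m ->] : exists m, n = m.+3 by exists (n - 3); lia.
have h2 : forall k, 2 * 'C(k, 2) = k * k.-1.
  elim=> [|k IH]; first by rewrite bin0n.
  rewrite bin2S mulnDr IH; case: k {IH} => [|k] //=; lia.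
rewrite (_ : m.+3 - 2 = m.+1); last by lia.
rewrite (_ : m.+3 - 3 = m); last by lia.
rewrite !bin2S.
have := h2 m.+1; rewrite bin2S /= => hh; nia.
Qed.

Lemma count_id n (F : {set {set {set 'I_n}}}) mu : 3 <= n ->
 (forall b, b \in F -> b \subset edges n /\ #|b| = 5) ->
 (forall e f, e \in edges n -> f \in edges n -> e != f ->
     #|[set b in F | (e \in b) && (f \in b)]| = mu) ->
 (n + 1) * \sum_(b in F) acnt b = 80 * #|F|.
Proof.
move=> hn hF hmu.
have hF' : forall b, b \in F -> b \subset edges n by move=> b /hF[].
have SA : \sum_(b in F) acnt b
    = mu * \sum_(e in edges n) \sum_(f in edges n) (adjb e f : nat).
  apply: sum_blocks => // e f _ _; rewrite /adjb; by case: (e != f).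
have SD : \sum_(b in F) dcnt b
    = mu * \sum_(e in edges n) \sum_(f in edges n) (disb e f : nat).
  apply: sum_blocks => // e f eE _; rewrite lt0b /disb => hd.
  apply/eqP => ef; subst f; move: hd; rewrite -setI_eq0 setIid.
  by apply/negP; apply: edge_ne0.
have S20 : \sum_(b in F) (acnt b + dcnt b) = 20 * #|F|.
  rewrite mulnC -sum_nat_const; apply: eq_bigr => b bF.
  have [sb cb] := hF b bF.
  rewrite /acnt /dcnt -big_split /=.
  rewrite (eq_bigr (fun _ => 4)); first by rewrite sum_nat_const cb.
  move=> e eb; rewrite -big_split /=.
  rewrite (eq_bigr (fun f => ((e != f) : nat))); first by rewrite sum_neq // cb.
  move=> f _; rewrite adj_dis //; apply: edge_ne0; exact: (subsetP sb).
have TA : \sum_(e in edges n) \sum_(f in edges n) (adjb e f : nat)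
    = #|edges n| * ('C(n, 2) - 1 - 'C(n - 2, 2)).
  by rewrite -sum_nat_const; apply: eq_bigr => e eE; rewrite adj_sum.
have TD : \sum_(e in edges n) \sum_(f in edges n) (disb e f : nat)
    = #|edges n| * 'C(n - 2, 2).
  by rewrite -sum_nat_const; apply: eq_bigr => e eE; rewrite dis_sum.
rewrite big_split /= SA SD TA TD in S20.
rewrite SA TA.
have K := key_arith hn.
move: S20 K.
set x := 'C(n - 2, 2); set y := 'C(n, 2) - 1 - x; set N := #|edges n|.
move=> S20 K.
have e1 : (n + 1) = (n - 3) + 4 by lia.
rewrite e1 mulnDl.
have : (n - 3) * (mu * (N * y)) = 4 * (mu * (N * x)).
  move: K; generalize (n - 3) => m K.
  rewrite (mulnCA 4) (mulnCA 4) K.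
  by rewrite (mulnCA m) (mulnCA m).
move=> ->; rewrite -mulnDr addnC S20 mulnA.
by [].
Qed.

Lemma exists_zero n (F : {set {set {set 'I_n}}}) : F != set0 -> 80 < n + 1 ->
  (n + 1) * \sum_(b in F) acnt b = 80 * #|F| -> exists2 b, b \in F & acnt b = 0.
Proof.
move=> F0 hn h.
case: (boolP [exists b in F, acnt b == 0]).
  by move=> /exists_inP[b bF /eqP]; exists b.
rewrite negb_exists_in => /forall_inP hall.
have : #|F| <= \sum_(b in F) acnt b.
  rewrite -sum1_card; apply: leq_sum => b bF; rewrite lt0n; exact: hall.
have : 0 < #|F| by rewrite card_gt0.
nia.
Qed.

Lemma acnt0 n (b : {set {set 'I_n}}) : acnt b = 0 ->
  forall e f, e \in b -> f \in b -> e != f -> [disjoint e & f].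
Proof.
move=> /eqP; rewrite /acnt sum_nat_eq0 => /forall_inP h e f eb fb ne.
move: (h e eb); rewrite sum_nat_eq0 => /forall_inP /(_ f fb).
by rewrite /adjb ne /= eqb0 negbK.
Qed.

Lemma setDUK' (T : finType) (A B : {set T}) : B \subset A -> (A :\: B) :|: B = A.
Proof.
move=> sBA; apply/setP => x; rewrite !inE.
case xB: (x \in B); rewrite ?orbT ?orbF /=; last by [].
by rewrite (subsetP sBA).
Qed.

Definition allb n : {set {set {set 'I_n}}} :=
  [set b : {set {set 'I_n}} | (b \subset edges n) && (#|b| == 5)].

Lemma full_count n (e f : {set 'I_n}) : e \in edges n -> f \in edges n -> e != f ->
  #|[set b in allb n | (e \in b) && (f \in b)]| = 'C(#|edges n| - 2, 3).
Proof.
move=> eE fE ef.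
set T := [set e; f].
have TE : T \subset edges n by rewrite subUset !sub1set eE fE.
have cT : #|T| = 2 by rewrite cards2 ef.
have cD : #|edges n :\: T| = #|edges n| - 2 by rewrite cardsD (setIidPr TE) cT.
rewrite -cD -cards_draws.
set D := [set c : {set {set 'I_n}} | c \subset edges n :\: T & #|c| == 3].
have -> : [set b in allb n | (e \in b) && (f \in b)] = [set c :|: T | c in D].
  apply/setP => b; rewrite !inE; apply/idP/idP.
    move=> /andP[/andP[sb /eqP cb] /andP[eb fb]].
    have Tb : T \subset b by rewrite subUset !sub1set eb fb.
    apply/imsetP; exists (b :\: T).
      rewrite inE; apply/andP; split; first by apply: setSD.
      by rewrite cardsD (setIidPr Tb) cb cT.
    by rewrite setDUK'.
  move=> /imsetP[c]; rewrite inE => /andP[sc /eqP cc] ->.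
  have dcT : c :&: T = set0.
    apply/setP => x; rewrite !inE; apply/negP => /andP[/(subsetP sc)]; rewrite !inE.
    by case/andP => /negP.
  rewrite !inE subUset TE andbT.
  rewrite (subset_trans sc) ?subsetDl //= cardsU dcT cards0 cc cT /=.
  by rewrite !eqxx !orbT.
apply: card_in_imset => c1 c2; rewrite !inE => /andP[s1 _] /andP[s2 _] h.
have dis : forall c : {set {set 'I_n}}, c \subset edges n :\: T -> (c :|: T) :\: T = c.
  move=> c sc; apply/setP => x; rewrite !inE.
  case xc: (x \in c) => /=; last by case: (_ || _).
  by have := subsetP sc x xc; rewrite !inE => /andP[-> _].
by rewrite -(dis _ s1) h dis.
Qed.

Theorem mainTheorem1 (n lam : nat) (hn : 538 <= n) (hlam : 0 < lam) :
  ~ exists B : {set {set {set 'I_n}}}, graphical_design n 2 5 lam B.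
Proof.
move=> [B [[_ [_ [B0 [BS [hB hdes]]]]] hinv]].
have n0 : 0 < n by lia.
pose x0 : 'I_n := Ordinal n0.
have hn3 : 3 <= n by lia.
have hn80 : 80 < n + 1 by lia.
have PT : forall (F : {set {set {set 'I_n}}}) e f,
    [set b in F | [set e; f] \subset b] = [set b in F | (e \in b) && (f \in b)].
  by move=> F e f; apply/setP => b; rewrite !inE subUset !sub1set.
have muB : forall e f, e \in edges n -> f \in edges n -> e != f ->
    #|[set b in B | (e \in b) && (f \in b)]| = lam.
  move=> e f eE fE ef; rewrite -PT; apply: hdes.
    by rewrite subUset !sub1set eE fE.
  by rewrite cards2 ef.
have [b1 b1B a1] := exists_zero B0 hn80 (count_id hn3 hB muB).
have BA : B \subset allb n.
  by apply/subsetP => b bB; have [sb cb] := hB b bB; rewrite inE sb cb eqxx.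
set C := allb n :\: B.
have C0 : C != set0.
  rewrite setD_eq0; apply: contra BS => AB.
  by rewrite -/(allb n) eqEsubset BA AB.
have hC : forall b, b \in C -> b \subset edges n /\ #|b| = 5.
  by move=> b; rewrite !inE => /andP[_ /andP[-> /eqP ->]].
have muC : forall e f, e \in edges n -> f \in edges n -> e != f ->
    #|[set b in C | (e \in b) && (f \in b)]| = 'C(#|edges n| - 2, 3) - lam.
  move=> e f eE fE ef.
  rewrite -(full_count eE fE ef) -(muB e f eE fE ef).
  have -> : [set b in C | (e \in b) && (f \in b)] =
      [set b in allb n | (e \in b) && (f \in b)] :\: [set b in B | (e \in b) && (f \in b)].
    apply/setP => b; rewrite !inE.
    by case: (b \in B); case: (e \in b); case: (f \in b); rewrite /= ?andbF ?andbT.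
  rewrite cardsD (setIidPr _) //; apply/subsetP => b; rewrite !inE.
  case bB: (b \in B) => //=; have := subsetP BA b bB; rewrite inE => /andP[-> ->].
  by case: (_ && _).
have [b2 b2C a2] := exists_zero C0 hn80 (count_id hn3 hC muC).
have m1 : matching b1.
  have [sb cb] := hB b1 b1B; split=> //; split=> //; exact: acnt0.
have m2 : matching b2.
  have [sb cb] := hC b2 b2C; split=> //; split=> //; exact: acnt0.
have [p hp] := match_trans x0 m1 m2.
have : block_act n p b1 \in B by rewrite -{1}(hinv p) imset_f.
rewrite hp => b2B.
by move: b2C; rewrite inE b2B.
Qed.
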